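(* Consider the Data Revocation Game with negligible unlearning cost, and assume $d_i^{\max}=d^{\max}$ for all $i$ and $m_1<m_2<\dots<m_I$, where $m_i=(\xi_i\ell_i)^{-1}-\epsilon_i$. Then every Nash equilibrium $(d_i^* )$ satisfies $d_1^*\le d_2^*\le\dots\le d_I^*$.
   Context: Data Revocation Game with negligible unlearning cost: a finite set of users $\mathcal I=\{1,\dots,I\}$, $I\ge 2$, each with parameters $d_i^{\max}>0$, $\epsilon_i>0$, $\xi_i>0$, $\ell_i>0$. Each user chooses $d_i\in[0,d_i^{\max}]$, with payoff $U_i(d_i,\boldsymbol{d_{-i}})=\ln\big(\sum_{j\in\mathcal I}d_j+\epsilon_i\big)-\xi_i d_i\ell_i$. A Nash equilibrium is a profile $(d_i^* )$ with $d_i^*\in[0,d_i^{\max}]$ and $U_i(d_i^*,\boldsymbol{d_{-i}^*})\ge U_i(d_i,\boldsymbol{d_{-i}^*})$ for all $i$ and $d_i\in[0,d_i^{\max}]$. The quantity $m_i=(\xi_i\ell_i)^{-1}-\epsilon_i$ is called the remaining metric of user $i$. *)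

(* Defs.v *)
(* concrete reals R. Users are indexed by 0 .. I-1 (paper: 1..I). *)
From Stdlib Require Import Reals Lra Lia.
Open Scope R_scope.

Fixpoint total (I : nat) (d : nat -> R) : R :=
  match I with
  | O => 0
  | S n => total n d + d n
  end.

Definition update (d : nat -> R) (i : nat) (x : R) : nat -> R :=
  fun j => if Nat.eqb j i then x else d j.

Definition payoff (I : nat) (eps xi l : nat -> R) (i : nat) (d : nat -> R) : R :=
  ln (total I d + eps i) - xi i * d i * l i.

Definition is_NE (I : nat) (dmax eps xi l : nat -> R) (d : nat -> R) : Prop :=
  forall i, (i < I)%nat ->
    (0 <= d i <= dmax i) /\
    forall x, 0 <= x <= dmax i ->
      payoff I eps xi l i (update d i x) <= payoff I eps xi l i d.

Definition remaining_metric (eps xi l : nat -> R) (i : nat) : R :=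
  / (xi i * l i) - eps i.

(* Main.v *)
Require Import Defs.
From Stdlib Require Import Reals Lra Lia.
Open Scope R_scope.

Lemma ln_diff_le (y z : R) : 0 < y -> 0 < z -> ln y - ln z <= y / z - 1.
Proof.
  intros Hy Hz.
  pose proof (exp_ineq1_le (ln y - ln z)) as H.
  unfold Rminus in H at 2. rewrite exp_plus, exp_Ropp, !exp_ln in H by lra.
  unfold Rdiv. lra.
Qed.

Lemma total_update (n : nat) (d : nat -> R) (i : nat) (x : R) :
  (i < n)%nat -> total n (update d i x) = total n d - d i + x.
Proof.
  induction n as [|n IH]; intros Hi; [lia|]. simpl.
  unfold update at 2.
  destruct (Nat.eqb n i) eqn:E.
  - apply Nat.eqb_eq in E; subst.
    assert (total i (update d i x) = total i d).
    { clear IH Hi. assert (forall k, (k <= i)%nat -> total k (update d i x) = total k d).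
      { induction k; intros; simpl; auto. rewrite IHk by lia. unfold update.
        replace (Nat.eqb k i) with false; auto. symmetry; apply Nat.eqb_neq; lia. }
      apply H; lia. }
    rewrite H. lra.
  - apply Nat.eqb_neq in E. rewrite IH by lia. lra.
Qed.

Lemma total_ge (n : nat) (d : nat -> R) :
  (forall k, (k < n)%nat -> 0 <= d k) ->
  0 <= total n d /\ forall i, (i < n)%nat -> d i <= total n d.
Proof.
  induction n as [|n IH]; intros H; simpl.
  - split; [lra | intros; lia].
  - destruct IH as [H1 H2]; [intros; apply H; lia|].
    assert (0 <= d n) by (apply H; lia).
    split; [lra|]. intros i Hi.
    destruct (Nat.eq_dec i n); [subst; lra|].
    pose proof (H2 i ltac:(lia)); lra.
Qed.

Theorem proposition4 (I : nat) (dmax eps xi l : nat -> R) (Dmax : R) :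
  (2 <= I)%nat ->
  (forall i, (i < I)%nat ->
     0 < dmax i /\ 0 < eps i /\ 0 < xi i /\ 0 < l i) ->
  (forall i, (i < I)%nat -> dmax i = Dmax) ->
  (forall i, (S i < I)%nat ->
     remaining_metric eps xi l i < remaining_metric eps xi l (S i)) ->
  forall d : nat -> R, is_NE I dmax eps xi l d ->
  forall i, (S i < I)%nat -> d i <= d (S i).
Proof.
  intros HI Hpos Hdm Hm d Hne i Hi.
  destruct (Rle_dec (d i) (d (S i))) as [|Hlt]; auto. exfalso.
  apply Rnot_le_lt in Hlt.
  set (a := d i) in *. set (b := d (S i)) in *.
  set (S0 := total I d).
  destruct (Hne i ltac:(lia)) as [[Ha0 HaD] Hdevi].
  destruct (Hne (S i) ltac:(lia)) as [[Hb0 HbD] Hdevj].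
  destruct (Hpos i ltac:(lia)) as [_ [ei [xii li]]].
  destruct (Hpos (S i) ltac:(lia)) as [_ [ej [xij lj]]].
  rewrite (Hdm i) in HaD, Hdevi by lia. rewrite (Hdm (S i)) in HbD, Hdevj by lia.
  destruct (total_ge I d) as [HS0 HSi].
  { intros k Hk. apply (Hne k Hk). }
  pose proof (HSi i ltac:(lia)) as HSa. fold S0 in HSa, HS0. fold a in HSa.
  pose proof (Hm i Hi) as Hmi. unfold remaining_metric in Hmi.
  set (ci := xi i * l i) in *. set (cj := xi (S i) * l (S i)) in *.
  assert (Hci : 0 < ci) by (unfold ci; nra).
  assert (Hcj : 0 < cj) by (unfold cj; nra).
  set (s := Rmin (a - b) ((/cj - eps (S i) - (/ci - eps i)) / 3)).
  assert (Hs1 : s <= a - b) by apply Rmin_l.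
  assert (Hs2 : s <= (/cj - eps (S i) - (/ci - eps i)) / 3) by apply Rmin_r.
  assert (Hs0 : 0 < s).
  { unfold s. apply Rmin_glb_lt; lra. }
  fold a in Ha0, HaD. fold b in Hb0, HbD. pose proof (Hdevi (a - s) ltac:(lra)) as Di.
  unfold payoff in Di. rewrite total_update in Di by lia. unfold update in Di.
  rewrite Nat.eqb_refl in Di. fold S0 a in Di.
  pose proof (Hdevj (b + s) ltac:(lra)) as Dj.
  unfold payoff in Dj. rewrite total_update in Dj by lia. unfold update in Dj.
  rewrite Nat.eqb_refl in Dj. fold S0 b in Dj.
  fold ci in Di. fold cj in Dj.
  (* user i: ci*s <= ln(S0+ei) - ln(S0-s+ei) <= s/(S0-s+ei) *)
  assert (P1 : 0 < S0 - a + (a - s) + eps i) by lra.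
  pose proof (ln_diff_le (S0 + eps i) (S0 - a + (a - s) + eps i) ltac:(lra) P1) as L1.
  assert (Q1 : ci * (S0 - s + eps i) <= 1).
  { assert (E1 : xi i * (a - s) * l i = ci * a - ci * s) by (unfold ci; ring).
    assert (E2 : xi i * a * l i = ci * a) by (unfold ci; ring).
    rewrite E1, E2 in Di.
    assert (ci * s <= (S0 + eps i) / (S0 - a + (a - s) + eps i) - 1) by lra.
    replace ((S0 + eps i) / (S0 - a + (a - s) + eps i) - 1)
      with (s / (S0 - s + eps i)) in H by (field; lra).
    apply Rmult_le_compat_r with (r := S0 - s + eps i) in H; [|lra].
    replace (s / (S0 - s + eps i) * (S0 - s + eps i)) with s in H by (field; lra). nra. }
  assert (P2 : 0 < S0 - b + (b + s) + eps (S i)) by lra.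
  pose proof (ln_diff_le (S0 + eps (S i)) (S0 - b + (b + s) + eps (S i)) ltac:(lra) P2) as L2.
  assert (Q2 : 1 <= cj * (S0 + s + eps (S i))).
  { assert (E1 : xi (S i) * (b + s) * l (S i) = cj * b + cj * s) by (unfold cj; ring).
    assert (E2 : xi (S i) * b * l (S i) = cj * b) by (unfold cj; ring).
    rewrite E1, E2 in Dj.
    assert (s / (S0 + s + eps (S i)) <= cj * s).
    { replace ((S0 + eps (S i)) / (S0 - b + (b + s) + eps (S i)) - 1)
        with (- (s / (S0 + s + eps (S i)))) in L2 by (field; lra). lra. }
    apply Rmult_le_compat_r with (r := S0 + s + eps (S i)) in H; [|lra].
    replace (s / (S0 + s + eps (S i)) * (S0 + s + eps (S i))) with s in H by (field; lra). nra. }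
  assert (R1 : S0 - s + eps i <= / ci).
  { apply Rmult_le_compat_l with (r := / ci) in Q1; [|left; apply Rinv_0_lt_compat; lra].
    rewrite <- Rmult_assoc, Rinv_l in Q1 by lra. lra. }
  assert (R2 : / cj <= S0 + s + eps (S i)).
  { apply Rmult_le_compat_l with (r := / cj) in Q2; [|left; apply Rinv_0_lt_compat; lra].
    rewrite <- Rmult_assoc, Rinv_l in Q2 by lra. lra. }
  lra.
Qed.
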